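(* Let $p$ and $q$ be primes with $\frac{3p-1}{2} < q < 2p-1$. Then $p$ and $q$ do not form a symmetric pair.
   Context: Two distinct primes $p$ and $q$ form a symmetric pair if $\gcd(p-1, q-1) = |p-q|$. *)

(* Defs.v *)
From mathcomp Require Import all_boot.

(* Two distinct primes p, q form a symmetric pair if gcd(p-1, q-1) = |p - q|.
   |p - q| on nat is (p - q) + (q - p) (truncated subtractions). *)
Definition symmetric_pair (p q : nat) : Prop :=
  [/\ prime p, prime q, p <> q & gcdn p.-1 q.-1 = (p - q) + (q - p)].

(* Main.v *)
Require Import Defs.
From mathcomp Require Import all_boot.
From mathcomp Require Import zify.

(* (3p-1)/2 < q  is stated as  3p - 1 < 2q  (exact, rational inequality). *)
Theorem lemma2 (p q : nat) :
  prime p -> prime q -> 3 * p - 1 < 2 * q -> q < 2 * p - 1 ->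
  ~ symmetric_pair p q.
Proof.
move=> pp pq h1 h2 [_ _ ne hg].
have p2 := prime_gt1 pp.
have hd : (p - q + (q - p)) %| p.-1 by rewrite -hg dvdn_gcdl.
case/dvdnP: hd => k hk.
have hp : p.-1 = p - 1 by lia.
rewrite hp in hk.
case: k hk => [|[|k]] hk; nia.
Qed.
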